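(* Let $\Phi$ be a positive trace-preserving linear map from operators on a finite-dimensional Hilbert space $\mathcal{H}$ to operators on a finite-dimensional Hilbert space $\mathcal{H}'$. Let $\rho,\varphi$ be density operators on $\mathcal{H}$ with $S(\rho\Vert\varphi)<\infty$, $[\rho,\varphi]=0$ and $[\Phi(\rho),\Phi(\varphi)]=0$. Write $\rho=\sum_i p_i|i\rangle\langle i|$ and $\varphi=\sum_i r_i|i\rangle\langle i|$ in a common orthonormal eigenbasis, and $\Phi(\rho)=\sum_\phi p'_\phi|\phi\rangle\langle\phi|$ and $\Phi(\varphi)=\sum_\phi r'_\phi|\phi\rangle\langle\phi|$ in a common orthonormal eigenbasis. Let $p_\rho(i,\phi)=p_i\,\mathrm{tr}\{\Phi(|i\rangle\langle i|)|\phi\rangle\langle\phi|\}$ and, for $p_\rho(i,\phi)>0$, let $m(i,\phi)=(-\ln p'_\phi+\ln p_i)-(-\ln r'_\phi+\ln r_i)$. Then \[ \sum_{i,\phi:\,p_\rho(i,\phi)>0}p_\rho(i,\phi)\,e^{-m(i,\phi)}=\gamma, \] where $\gamma=\mathrm{tr}\{\Pi^\rho\,\mathcal{R}_\Phi^\varphi(\Phi(\rho))\}\in(0,1]$. Moreover, $\gamma=1$ when $\rho$ and $\varphi$ have the same support.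
   Context: $S(\rho\Vert\sigma)$ is the quantum relative entropy ($\mathrm{tr}\{\rho(\ln\rho-\ln\sigma)\}$ if $\mathrm{supp}\,\rho\subseteq\mathrm{supp}\,\sigma$, $+\infty$ otherwise). $\Pi^\rho$ is the orthogonal projection onto the support of $\rho$. The Petz recovery map with reference state $\varphi$ is $\mathcal{R}_\Phi^\varphi(X)=\varphi^{1/2}\Phi^\dagger\big(\Phi(\varphi)^{-1/2}X\Phi(\varphi)^{-1/2}\big)\varphi^{1/2}$, where $\Phi^\dagger$ is the Hilbert–Schmidt adjoint of $\Phi$ and inverses are taken on the support. *)

(* Defs.v *)
From HB Require Import structures.
From mathcomp Require Import all_boot all_order all_algebra.
From mathcomp Require Import reals ereal sequences exp.
From mathcomp.real_closed Require Import complex.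

Set Implicit Arguments.
Unset Strict Implicit.
Unset Printing Implicit Defensive.

Import Order.TTheory GRing.Theory Num.Theory.
Local Open Scope ring_scope.
Local Open Scope sesquilinear_scope.

Section QDefs.
Variable R : realType.
Local Notation C := R[i].

Definition rc (x : R) : C := (x%:C)%C.

Definition dagger m n (A : 'M[C]_(m, n)) : 'M[C]_(n, m) := A ^t*.

Definition ketbra n (u : 'cV[C]_n) : 'M[C]_n := u *m dagger u.

Definition psdmx n (A : 'M[C]_n) : Prop :=
  A \is hermsymmx /\ forall v : 'cV[C]_n, 0 <= (dagger v *m A *m v) 0 0.

Definition density n (rho : 'M[C]_n) : Prop := psdmx rho /\ \tr rho = 1.

Definition positive_map n m (Phi : 'M[C]_n -> 'M[C]_m) : Prop :=
  forall A, psdmx A -> psdmx (Phi A).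
Definition trace_preserving n m (Phi : 'M[C]_n -> 'M[C]_m) : Prop :=
  forall A, \tr (Phi A) = \tr A.

(* Hilbert-Schmidt adjoint:  tr(Y^* Phi(X)) = tr((Phi^dag Y)^* X);
   entrywise (Phi^dag Y)_{ij} = tr(Phi(E_ij)^* Y). *)
Definition hsadj n m (Phi : 'M[C]_n -> 'M[C]_m) (Y : 'M[C]_m) : 'M[C]_n :=
  \matrix_(i, j) \tr (dagger (Phi (delta_mx i j)) *m Y).

(* functional calculus of a (normal, here Hermitian) matrix via the spectral
   decomposition A = P^* diag(d) P of MathComp's spectral.v; f acts on the
   (real) eigenvalues *)
Definition mxfun n (f : R -> R) (A : 'M[C]_n) : 'M[C]_n :=
  let P := spectralmx A in
  dagger P *m diag_mx (\row_i rc (f (complex.Re (spectral_diag A 0 i)))) *m P.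

Definition mxsqrt n (A : 'M[C]_n) := mxfun (fun x => Num.sqrt x) A.
(* A^{-1/2}, inverse taken on the support *)
Definition mxinvsqrt n (A : 'M[C]_n) :=
  mxfun (fun x => if 0 < x then (Num.sqrt x)^-1 else 0) A.
Definition mxlog n (A : 'M[C]_n) := mxfun (fun x => if 0 < x then ln x else 0) A.
Definition suppproj n (A : 'M[C]_n) := mxfun (fun x => if x != 0 then 1 else 0) A.

(* supp A included in supp B (support = range = column space) *)
Definition supp_sub n (A B : 'M[C]_n) : bool := (A^T <= B^T)%MS.

Definition relent n (rho sigma : 'M[C]_n) : \bar R :=
  if supp_sub rho sigma
  then (complex.Re (\tr (rho *m (mxlog rho - mxlog sigma))))%:E
  else +oo%E.

Definition petz n m (Phi : 'M[C]_n -> 'M[C]_m) (vphi : 'M[C]_n) (X : 'M[C]_m)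
  : 'M[C]_n :=
  mxsqrt vphi *m hsadj Phi (mxinvsqrt (Phi vphi) *m X *m mxinvsqrt (Phi vphi))
    *m mxsqrt vphi.

End QDefs.

(* Main.v *)
Require Import Defs.
From HB Require Import structures.
From mathcomp Require Import all_boot all_order all_algebra.
From mathcomp Require Import reals ereal sequences exp.
From mathcomp.real_closed Require Import complex.
From mathcomp Require Import ring lra.
Import Order.TTheory GRing.Theory Num.Theory.
Set Implicit Arguments.
Unset Strict Implicit.
Local Open Scope ring_scope.

Section Gen.
Local Open Scope sesquilinear_scope.
Variable C : numClosedFieldType.

Lemma unitary_tV n (U : 'M[C]_n) : U \is unitarymx -> U^t* *m U = 1%:M.
Proof. by move=> Uu; rewrite -{1}[U^t*]mul1mx mulmxKtV. Qed.

Lemma diag_transfer n (P W : 'M[C]_n) (d e : 'rV[C]_n) (g : C -> C) :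
  P \is unitarymx -> W \is unitarymx ->
  P^t* *m diag_mx d *m P = W^t* *m diag_mx e *m W ->
  P^t* *m diag_mx (\row_i g (d 0 i)) *m P = W^t* *m diag_mx (\row_i g (e 0 i)) *m W.
Proof.
move=> Pu Wu H.
set Q := P *m W^t*.
have HQ : diag_mx d *m Q = Q *m diag_mx e.
  have := congr1 (fun X => P *m X *m W^t*) H => /=.
  rewrite !mulmxA (unitarymxP Pu) mul1mx mulmxtVK //.
have QW : Q *m W = P by rewrite /Q -mulmxA unitary_tV // mulmx1.
have PQ : P^t* *m Q = W^t* by rewrite /Q mulmxA unitary_tV // mul1mx.
clearbody Q.
have HQg : diag_mx (\row_i g (d 0 i)) *m Q = Q *m diag_mx (\row_i g (e 0 i)).
  apply/matrixP => a b; have /matrixP /(_ a b) := HQ.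
  rewrite !(mul_mx_diag, mul_diag_mx) !mxE.
  have [->|q0] := eqVneq (Q a b) 0; first by rewrite !mulr0 !mul0r.
  move=> h; have -> : d 0 a = e 0 b by apply: (mulIf q0); rewrite h mulrC.
  by rewrite mulrC.
have -> : P^t* *m diag_mx (\row_i g (d 0 i)) *m P =
   P^t* *m diag_mx (\row_i g (d 0 i)) *m Q *m W by rewrite -[_ *m Q *m W]mulmxA QW.
by rewrite -[_ *m _ *m Q]mulmxA HQg !mulmxA PQ.
Qed.

Lemma spectral_transfer n (A W : 'M[C]_n) (e : 'rV[C]_n) (g : C -> C) :
  W \is unitarymx -> A = W^t* *m diag_mx e *m W ->
  (spectralmx A)^t* *m diag_mx (\row_i g (spectral_diag A 0 i)) *m spectralmx A =
  W^t* *m diag_mx (\row_i g (e 0 i)) *m W.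
Proof.
move=> Wu eAW.
have An : A \is normalmx.
  apply/orthomx_spectral_subproof; exists (W, e) => //=.
  by rewrite invmx_unitary.
have := orthomx_spectralP An; rewrite invmx_unitary ?spectral_unitarymx // => eA.
apply: diag_transfer => //; first exact: spectral_unitarymx.
by rewrite -eA.
Qed.

Lemma diag_herm_gen n (U : 'M[C]_n) (b : 'rV[C]_n) :
  (forall i, (b 0 i)^* = b 0 i) ->
  (U *m diag_mx b *m U^t*)^t* = U *m diag_mx b *m U^t*.
Proof.
move=> hb; rewrite !trmx_mul !map_mxM trmxCK mulmxA; congr (_ *m _ *m _).
rewrite tr_diag_mx map_diag_mx; congr diag_mx; apply/rowP => i; rewrite !mxE.
exact: hb.
Qed.

End Gen.

Section Aux.
Local Open Scope sesquilinear_scope.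
Variable R : realType.
Local Notation C := R[i].



Lemma sum_ketbra n (U : 'M[C]_n) (a : 'I_n -> C) :
  \sum_i a i *: ketbra (col i U) = U *m diag_mx (\row_i a i) *m U^t*.
Proof.
apply/matrixP => x y; rewrite summxE !mxE; apply: eq_bigr => j _.
by rewrite mul_mx_diag !mxE big_ord1 !mxE mulrCA mulrA.
Qed.



Lemma mxfun_diag n (f : R -> R) (U : 'M[C]_n) (c : 'I_n -> R) : U \is unitarymx ->
  mxfun f (U *m diag_mx (\row_i rc (c i)) *m U^t*) =
  U *m diag_mx (\row_i rc (f (c i))) *m U^t*.
Proof.
move=> Uu; rewrite /mxfun /dagger.
have Utu : U^t* \is unitarymx by rewrite trmxC_unitary.
have := @spectral_transfer _ n (U *m diag_mx (\row_i rc (c i)) *m U^t*) (U^t*)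
  (\row_i rc (c i)) (fun z => rc (f (complex.Re z))) Utu.
rewrite trmxCK => /(_ erefl) ->.
by congr (_ *m diag_mx _ *m _); apply/rowP => i; rewrite !mxE.
Qed.


Lemma rcD (x y : R) : rc (x + y) = rc x + rc y. Proof. by rewrite /rc rmorphD. Qed.
Lemma rcM (x y : R) : rc (x * y) = rc x * rc y. Proof. by rewrite /rc rmorphM. Qed.
Lemma rc_sum I (r : seq I) (P : pred I) (F : I -> R) :
  rc (\sum_(i <- r | P i) F i) = \sum_(i <- r | P i) rc (F i).
Proof. by rewrite /rc rmorph_sum. Qed.
Lemma rc0 : @rc R 0 = 0. Proof. by []. Qed.
Lemma rc1 : @rc R 1 = 1. Proof. by []. Qed.
Lemma rc_inj : injective (@rc R). Proof. exact: complexI. Qed.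
Lemma rc_ge0 (x : R) : (0 <= rc x) = (0 <= x). Proof. exact: ler0c. Qed.
Lemma rc_gt0 (x : R) : (0 < rc x) = (0 < x). Proof. by rewrite -rc0 /rc ltcR. Qed.
Lemma rc_le (x y : R) : (rc x <= rc y) = (x <= y). Proof. exact: lecR. Qed.
Lemma rc_conj (x : R) : (rc x)^* = rc x. Proof. exact: conjc_real. Qed.
Lemma ge0_rc (x : C) : 0 <= x -> rc (complex.Re x) = x.
Proof. by move=> h; have := ger0_Im h; case: x h => a b /= _ ->. Qed.

Lemma dag_col n (U : 'M[C]_n) j : dagger (col j U) = row j (U^t*).
Proof. by apply/matrixP => a b; rewrite !mxE. Qed.

Lemma mx11_mul n (A : 'M[C]_(1, n)) (B : 'M[C]_(n, 1)) (D : 'M[C]_1) :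
  (A *m B *m D) 0 0 = (A *m B) 0 0 * D 0 0.
Proof. by rewrite mxE big_ord1. Qed.

Lemma row_diag n (U : 'M[C]_n) (d : 'rV[C]_n) j : U \is unitarymx ->
  dagger (col j U) *m (U *m diag_mx d *m U^t*) = d 0 j *: dagger (col j U).
Proof.
move=> Uu; rewrite dag_col !mulmxA -row_mul unitary_tV //.
have -> : row j (1%:M : 'M[C]_n) *m diag_mx d = d 0 j *: row j 1%:M.
  apply/matrixP => a b; rewrite mul_mx_diag !mxE.
  by case: eqVneq => [->|_] /=; rewrite ?mulr1 ?mul1r ?mulr0 ?mul0r.
by rewrite -?scalemxAl -row_mul mul1mx.
Qed.

Lemma dag_col_col n (U : 'M[C]_n) j : U \is unitarymx ->
  (dagger (col j U) *m col j U) 0 0 = 1.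
Proof.
move=> Uu; rewrite dag_col; transitivity ((U^t* *m U) j j).
  by rewrite !mxE; apply: eq_bigr => k _; rewrite !mxE.
by rewrite unitary_tV // mxE eqxx.
Qed.

Lemma quad_diag n (U : 'M[C]_n) (d : 'rV[C]_n) j : U \is unitarymx ->
  (dagger (col j U) *m (U *m diag_mx d *m U^t*) *m col j U) 0 0 = d 0 j.
Proof.
move=> Uu; rewrite row_diag //. by rewrite -scalemxAl mxE dag_col_col // mulr1.
Qed.

Lemma tr_ketbra_mul n (M : 'M[C]_n) (w : 'cV[C]_n) :
  \tr (M *m ketbra w) = (dagger w *m M *m w) 0 0.
Proof.
rewrite /ketbra mulmxA mxtrace_mulC mulmxA.
by rewrite /mxtrace big_ord1.
Qed.

Lemma tr_ketbra n (U : 'M[C]_n) j : U \is unitarymx -> \tr (ketbra (col j U)) = 1.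
Proof.
move=> Uu; rewrite /ketbra mxtrace_mulC /mxtrace big_ord1; exact: dag_col_col.
Qed.

Lemma diag_mul n (U : 'M[C]_n) (a b : 'I_n -> C) : U \is unitarymx ->
  U *m diag_mx (\row_i a i) *m U^t* *m (U *m diag_mx (\row_i b i) *m U^t*) =
  U *m diag_mx (\row_i (a i * b i)) *m U^t*.
Proof.
move=> Uu; rewrite !mulmxA mulmxKtV //; congr (_ *m _); rewrite -mulmxA; congr (_ *m _).
apply/matrixP => x y; rewrite mul_diag_mx !mxE.
by case: eqVneq => [->|_] /=; rewrite ?mulr1n ?mulr0n ?mulr0.
Qed.

Lemma diag_herm n (U : 'M[C]_n) (b : 'I_n -> R) :
  (U *m diag_mx (\row_i rc (b i)) *m U^t*)^t* = U *m diag_mx (\row_i rc (b i)) *m U^t*.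
Proof. by apply: diag_herm_gen => i; rewrite mxE; exact: rc_conj. Qed.

Lemma ketbra_herm n (u : 'cV[C]_n) : ketbra u \is hermsymmx.
Proof.
apply/is_hermitianmxP; rewrite expr0 scale1r /ketbra /dagger.
apply/matrixP => a b; by rewrite !mxE !big_ord1 !mxE rmorphM /= ?conjCK ?conjcK mulrC.
Qed.


Lemma mx11_mulE k (A : 'M[C]_(1, k)) (B : 'M[C]_(k, 1)) :
  (A *m B) 0 0 = \sum_j A 0 j * B j 0.
Proof. by rewrite mxE. Qed.

Lemma ketbra_psd n (u : 'cV[C]_n) : psdmx (ketbra u).
Proof.
split; first exact: ketbra_herm.
move=> v; rewrite /ketbra mulmxA -mulmxA mx11_mulE big_ord1.
have -> : (dagger v *m u) 0 0 * (dagger u *m v) 0 0 =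
          (dagger v *m u) 0 0 * ((dagger v *m u) 0 0)^*.
  congr (_ * _); rewrite !mxE rmorph_sum; apply: eq_bigr => j _.
  by rewrite !mxE rmorphM /= ?conjCK ?conjcK mulrC.
exact: mulcJ_ge0.
Qed.

Lemma trC k (X : 'M[C]_k) : \tr (X^t*) = (\tr X)^*.
Proof. by rewrite /mxtrace rmorph_sum; apply: eq_bigr => i _; rewrite !mxE. Qed.

Lemma tr_sum k I (r : seq I) (P : pred I) (F : I -> 'M[C]_k) :
  \tr (\sum_(i <- r | P i) F i) = \sum_(i <- r | P i) \tr (F i).
Proof. exact: (big_morph _ (@mxtraceD _ _) (mxtrace0 _ _)). Qed.

Lemma tr_hsadj n m (Phi : {linear 'M[C]_n -> 'M[C]_m}) (B : 'M[C]_n) (Y : 'M[C]_m) :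
  B^t* = B -> Y^t* = Y -> \tr (B *m hsadj Phi Y) = (\tr (Y *m Phi B))^*.
Proof.
move=> hB hY.
have HE : forall c a, hsadj Phi Y c a = (\tr (Y *m Phi (delta_mx c a)))^*.
  move=> c a; rewrite mxE -trC /dagger -[in RHS]hY.
  by rewrite trmx_mul map_mxM trmxCK.
have -> : Phi B = \sum_c \sum_a B c a *: Phi (delta_mx c a).
  rewrite {1}(matrix_sum_delta B) raddf_sum; apply: eq_bigr => c _.
  rewrite raddf_sum; apply: eq_bigr => a _. exact: linearZ_LR.
have -> : \tr (B *m hsadj Phi Y) = \sum_a \sum_c B a c * hsadj Phi Y c a.
  by rewrite /mxtrace; apply: eq_bigr => a _; rewrite mxE.
rewrite mulmx_sumr tr_sum rmorph_sum exchange_big /=; apply: eq_bigr => a _.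
rewrite mulmx_sumr tr_sum rmorph_sum /=; apply: eq_bigr => c _.
rewrite -scalemxAr mxtraceZ rmorphM /= HE; congr (_ * _).
by rewrite -[in LHS]hB !mxE.
Qed.


Lemma quad_lin n m (Phi : {linear 'M[C]_n -> 'M[C]_m}) (U : 'M[C]_n) (c : 'I_n -> C)
  (w : 'cV[C]_m) :
  (dagger w *m Phi (\sum_i c i *: ketbra (col i U)) *m w) 0 0 =
  \sum_i c i * (dagger w *m Phi (ketbra (col i U)) *m w) 0 0.
Proof.
rewrite linear_sum mulmx_sumr mulmx_suml summxE; apply: eq_bigr => i _.
rewrite linearZ_LR.
by rewrite -scalemxAr -scalemxAl mxE.
Qed.

Lemma tr_form n m (Phi : {linear 'M[C]_n -> 'M[C]_m}) (U : 'M[C]_n) (V : 'M[C]_m)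
  (c : 'I_n -> C) (d : 'I_m -> C) :
  \tr (Phi (\sum_i c i *: ketbra (col i U)) *m \sum_k d k *: ketbra (col k V)) =
  \sum_i \sum_k c i * d k * (dagger (col k V) *m Phi (ketbra (col i U)) *m col k V) 0 0.
Proof.
rewrite mulmx_sumr tr_sum [in RHS]exchange_big /=; apply: eq_bigr => k _.
rewrite -scalemxAr mxtraceZ tr_ketbra_mul quad_lin mulr_sumr.
by apply: eq_bigr => i _; rewrite mulrCA mulrA.
Qed.

Lemma sum_ketbra1 n (V : 'M[C]_n) : V \is unitarymx -> \sum_k ketbra (col k V) = 1%:M.
Proof.
move=> Vu; transitivity (\sum_k (1 : C) *: ketbra (col k V)).
  by apply: eq_bigr => k _; rewrite scale1r.
rewrite sum_ketbra; have -> : \row_(i < n) (1 : C) = const_mx 1 by apply/rowP => i; rewrite !mxE.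
by rewrite diag_const_mx mulmx1 (unitarymxP Vu).
Qed.

Lemma tr_cyc k (A B D E : 'M[C]_k) : \tr (A *m (B *m D *m E)) = \tr (E *m A *m B *m D).
Proof. by rewrite !mulmxA mxtrace_mulC !mulmxA. Qed.

Lemma supp_pos n (U : 'M[C]_n) (a b : 'I_n -> R) : U \is unitarymx ->
  (forall i, 0 <= b i) ->
  supp_sub (U *m diag_mx (\row_i rc (a i)) *m U^t*) (U *m diag_mx (\row_i rc (b i)) *m U^t*) ->
  forall i, a i != 0 -> 0 < b i.
Proof.
move=> Uu hb; rewrite /supp_sub => /submxP [D hD] i ai0.
rewrite lt_def hb andbT; apply: contra ai0 => /eqP bi0.
set A := U *m _ *m _ in hD; set B := U *m _ *m _ in hD.
have AE : A = B *m D^T by rewrite -[A]trmxK hD trmx_mul trmxK.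
have := @quad_diag _ U (\row_i rc (a i)) i Uu; rewrite -/A AE mulmxA row_diag // mxE bi0.
rewrite rc0 scale0r !mul0mx mxE => /esym h.
by apply/eqP; apply: rc_inj; rewrite h mxE.
Qed.

End Aux.
Section Real.
Variable R : realType.

Lemma le_sum1 (I : finType) (F : I -> R) j : (forall i, 0 <= F i) -> F j <= \sum_i F i.
Proof. by move=> h; rewrite (bigD1 j) //= lerDl sumr_ge0. Qed.
Arguments le_sum1 {I} F j.

Lemma sqrt_mul (x : R) : 0 <= x -> Num.sqrt x * Num.sqrt x = x.
Proof. by move=> hx; rewrite -expr2 sqr_sqrtr. Qed.

Lemma real_part n m (p r : 'I_n -> R) (p' r' : 'I_m -> R) (T : 'I_n -> 'I_m -> R) :
  (forall i, 0 <= p i) -> (forall i, 0 <= r i) -> (forall i k, 0 <= T i k) ->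
  (forall k, p' k = \sum_i p i * T i k) -> (forall k, r' k = \sum_i r i * T i k) ->
  (forall i, \sum_k T i k = 1) -> \sum_i p i = 1 -> (forall i, p i != 0 -> 0 < r i) ->
  let bb i := Num.sqrt (r i) * (if p i != 0 then 1 else 0) * Num.sqrt (r i) in
  let a k := if 0 < r' k then (Num.sqrt (r' k))^-1 else 0 in
  let yy k := a k * p' k * a k in
  let mm i k := (- ln (p' k) + ln (p i)) - (- ln (r' k) + ln (r i)) in
  let G := \sum_i \sum_k bb i * yy k * T i k in
  \sum_i \sum_(k | 0 < p i * T i k) p i * T i k * expR (- mm i k) = G /\ 0 < G /\ G <= 1
  /\ ((forall i, r i != 0 -> 0 < p i) -> G = 1).
Proof.
move=> hp hr hT hp' hr' hT1 hp1 hpr bb a yy mm G.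
have r'0 : forall k, 0 <= r' k by move=> k; rewrite hr' sumr_ge0 // => i _; rewrite mulr_ge0.
have p'0 : forall k, 0 <= p' k by move=> k; rewrite hp' sumr_ge0 // => i _; rewrite mulr_ge0.
have bbE : forall i, bb i = if p i != 0 then r i else 0.
  by move=> i; rewrite /bb; case: ifP => _; rewrite ?mulr1 ?mulr0 ?mul0r ?sqrt_mul.
have yyE : forall k, yy k = if 0 < r' k then p' k / r' k else 0.
  move=> k; rewrite /yy /a; case: ifP => h; rewrite ?mulr0 ?mul0r //.
  have s0 : Num.sqrt (r' k) != 0 by rewrite gt_eqF // sqrtr_gt0.
  by rewrite -[in RHS](@sqrt_mul (r' k) (ltW h)); field.
have yy0 : forall k, 0 <= yy k.
  by move=> k; rewrite yyE; case: ifP => h //; rewrite divr_ge0 // ltW.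
have bb0 : forall i, 0 <= bb i by move=> i; rewrite bbE; case: ifP.
have term : forall i k, (if 0 < p i * T i k then p i * T i k * expR (- mm i k) else 0)
    = bb i * yy k * T i k.
  move=> i k; case: ifP => hpos.
    have pi0 : 0 < p i.
      by rewrite lt_def hp andbT; apply: contraTneq hpos => ->; rewrite mul0r ltxx.
    have Ti0 : 0 < T i k.
      by rewrite lt_def hT andbT; apply: contraTneq hpos => ->; rewrite mulr0 ltxx.
    have ri0 : 0 < r i by apply: hpr; rewrite gt_eqF.
    have rk0 : 0 < r' k.
      apply: (lt_le_trans (mulr_gt0 ri0 Ti0)); rewrite hr'.
      by apply: (le_sum1 (fun j => r j * T j k)) => j; rewrite mulr_ge0.
    have pk0 : 0 < p' k.
      apply: (lt_le_trans hpos); rewrite hp'.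
      by apply: (le_sum1 (fun j => p j * T j k)) => j; rewrite mulr_ge0.
    rewrite bbE yyE gt_eqF // rk0.
    have -> : - mm i k = (ln (p' k) + ln (r i)) - (ln (p i) + ln (r' k)).
      by rewrite /mm; lra.
    rewrite expRD expRN !expRD !lnK ?posrE //.
    by rewrite /=; field; rewrite ?gt_eqF.
  have : p i * T i k = 0.
    by apply/eqP; rewrite eq_le mulr_ge0 // andbT leNgt hpos.
  move/eqP; rewrite mulf_eq0 => /orP[/eqP h|/eqP ->]; last by rewrite mulr0.
  by rewrite bbE h eqxx !mul0r.
have LHS : \sum_i \sum_(k | 0 < p i * T i k) p i * T i k * expR (- mm i k) = G.
  rewrite /G; apply: eq_bigr => i _; rewrite big_mkcond /=; apply: eq_bigr => k _; exact: term.
have G0 : forall i k, 0 <= bb i * yy k * T i k.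
  by move=> i k; apply: mulr_ge0; [apply: mulr_ge0|]; [exact: bb0|exact: yy0|exact: hT].
have sumpT : \sum_i \sum_k p i * T i k = 1.
  by rewrite -hp1; apply: eq_bigr => i _; rewrite -mulr_sumr hT1 mulr1.
split => //; split.
  have [/existsP [i /existsP [k hik]]|hno] := boolP [exists i, exists k, 0 < p i * T i k].
    apply: (lt_le_trans _ (le_sum1 (fun i => \sum_k bb i * yy k * T i k) i _)); last first.
      by move=> j; apply: sumr_ge0 => k' _.
    apply: (lt_le_trans _ (le_sum1 (fun k => bb i * yy k * T i k) k _)) => //=.
    by rewrite -term hik /= mulr_gt0 // expR_gt0.
  have : \sum_i \sum_k p i * T i k = 0.
    apply: big1 => i _; apply: big1 => k _; apply/eqP.
    rewrite eq_le mulr_ge0 ?hp ?hT // andbT leNgt.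
    apply: contra hno => h; apply/existsP; exists i; apply/existsP; exists k; exact: h.
  by rewrite sumpT => /eqP; rewrite oner_eq0.
have Gle : G <= \sum_k yy k * r' k.
  rewrite /G exchange_big /=; apply: ler_sum => k _; rewrite hr' mulr_sumr.
  apply: ler_sum => i _.
  have -> : yy k * (r i * T i k) = r i * yy k * T i k by ring.
  apply: ler_wpM2r; [exact: hT | apply: ler_wpM2r; [exact: yy0 | rewrite bbE; case: ifP]] => //.
have yr : forall k, yy k * r' k = if 0 < r' k then p' k else 0.
  by move=> k; rewrite yyE; case: ifP => h; rewrite ?mul0r // mulfVK // gt_eqF.
have sump' : \sum_k p' k = 1.
  rewrite -sumpT exchange_big /=; exact: eq_bigr.
split.
  apply: (le_trans Gle); rewrite -sump'; apply: ler_sum => k _; rewrite yr.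
  by case: ifP.
move=> hrp.
have bbE' : forall i, bb i = r i.
  move=> i; rewrite bbE; have [h|//] := eqVneq (p i) 0.
  by case: (eqVneq (r i) 0) => [->//|/hrp]; rewrite h ltxx.
have -> : G = \sum_k yy k * r' k.
  rewrite /G exchange_big /=; apply: eq_bigr => k _; rewrite hr' mulr_sumr.
  by apply: eq_bigr => i _; rewrite bbE'; ring.
rewrite -sump'; apply: eq_bigr => k _; rewrite yr; case: ifP => // hk.
have rk : r' k = 0 by apply/eqP; rewrite eq_le r'0 andbT leNgt hk.
rewrite hp' big1 // => i _.
have := (@psumr_eq0P _ _ _ _ (fun j _ => mulr_ge0 (hr j) (hT j k)) (esym (etrans (esym rk) (hr' k))) i isT).
move/eqP; rewrite mulf_eq0 => /orP[/eqP h|/eqP ->]; last by rewrite mulr0.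
case: eqVneq (hpr i) => [-> _|_ /(_ isT)]; first by rewrite mul0r.
by rewrite h ltxx.
Qed.

End Real.

Unset Implicit Arguments.
Set Strict Implicit.

Theorem mainTheorem14 (R : realType) (n m : nat)
  (Phi : {linear 'M[R[i]]_n -> 'M[R[i]]_m})
  (rho vphi : 'M[R[i]]_n)
  (U : 'M[R[i]]_n) (p r : 'I_n -> R)
  (V : 'M[R[i]]_m) (p' r' : 'I_m -> R) :
  positive_map Phi -> trace_preserving Phi ->
  density rho -> density vphi ->
  (relent rho vphi < +oo)%E ->
  rho *m vphi = vphi *m rho ->
  Phi rho *m Phi vphi = Phi vphi *m Phi rho ->
  U \is unitarymx ->
  rho = \sum_(i < n) rc (p i) *: ketbra (col i U) ->
  vphi = \sum_(i < n) rc (r i) *: ketbra (col i U) ->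
  V \is unitarymx ->
  Phi rho = \sum_(k < m) rc (p' k) *: ketbra (col k V) ->
  Phi vphi = \sum_(k < m) rc (r' k) *: ketbra (col k V) ->
  let prho i k := rc (p i) * \tr (Phi (ketbra (col i U)) *m ketbra (col k V)) in
  let mm i k := (- ln (p' k) + ln (p i)) - (- ln (r' k) + ln (r i)) in
  let gamma := \tr (suppproj rho *m petz Phi vphi (Phi rho)) in
  \sum_(i < n) \sum_(k < m | 0 < prho i k) prho i k * rc (expR (- mm i k)) = gamma
  /\ 0 < gamma /\ gamma <= 1
  /\ (supp_sub rho vphi -> supp_sub vphi rho -> gamma = 1).
Proof.
move=> Hpos Htp [rhopsd trrho] [vpsd trv] Hrel Hc1 Hc2 Uu Hrho Hv Vu Hprho Hpv prho mm gamma.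
pose T i k := complex.Re ((dagger (col k V) *m Phi (ketbra (col i U)) *m col k V) 0 0).
have qT : forall i k,
    (dagger (col k V) *m Phi (ketbra (col i U)) *m col k V) 0 0 = rc (T i k).
  by move=> i k; rewrite /T ge0_rc //; apply: (Hpos _ (ketbra_psd (col i U))).2.
have T0 : forall i k, 0 <= T i k by move=> i k; rewrite -rc_ge0 -qT;
  apply: (Hpos _ (ketbra_psd (col i U))).2.
have hrhoD : rho = U *m diag_mx (\row_i rc (p i)) *m (U^t*)%sesqui by rewrite Hrho sum_ketbra.
have hvD : vphi = U *m diag_mx (\row_i rc (r i)) *m (U^t*)%sesqui by rewrite Hv sum_ketbra.
have hprD : Phi rho = V *m diag_mx (\row_i rc (p' i)) *m (V^t*)%sesqui by rewrite Hprho sum_ketbra.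
have hpvD : Phi vphi = V *m diag_mx (\row_i rc (r' i)) *m (V^t*)%sesqui by rewrite Hpv sum_ketbra.
have hp : forall i, 0 <= p i.
  by move=> i; rewrite -rc_ge0; have := rhopsd.2 (col i U); rewrite hrhoD quad_diag // mxE.
have hr : forall i, 0 <= r i.
  by move=> i; rewrite -rc_ge0; have := vpsd.2 (col i U); rewrite hvD quad_diag // mxE.
have hp'E : forall k, p' k = \sum_i p i * T i k.
  move=> k; apply: rc_inj; rewrite rc_sum.
  have := @quad_diag _ _ V (\row_k rc (p' k)) k Vu; rewrite -hprD Hrho quad_lin mxE => <-.
  by apply: eq_bigr => i _; rewrite rcM qT.
have hr'E : forall k, r' k = \sum_i r i * T i k.
  move=> k; apply: rc_inj; rewrite rc_sum.
  have := @quad_diag _ _ V (\row_k rc (r' k)) k Vu; rewrite -hpvD Hv quad_lin mxE => <-.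
  by apply: eq_bigr => i _; rewrite rcM qT.
have hT1 : forall i, \sum_k T i k = 1.
  move=> i; apply: rc_inj; rewrite rc_sum rc1.
  under eq_bigr do rewrite -qT -tr_ketbra_mul.
  by rewrite -tr_sum -mulmx_sumr sum_ketbra1 // mulmx1 Htp tr_ketbra.
have hp1 : \sum_i p i = 1.
  apply: rc_inj; rewrite rc_sum rc1 -trrho Hrho tr_sum; apply: eq_bigr => i _.
  by rewrite mxtraceZ tr_ketbra // mulr1.
have hsupp : supp_sub rho vphi.
  by move: Hrel; rewrite /relent; case: ifP.
have hpr : forall i, p i != 0 -> 0 < r i.
  by apply: (supp_pos Uu hr); rewrite -hrhoD -hvD.
have [hL [hG0 [hG1 hGeq]]] := real_part hp hr T0 hp'E hr'E hT1 hp1 hpr.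
have hgam : gamma = rc (\sum_i \sum_k (Num.sqrt (r i) * (if p i != 0 then 1 else 0) * Num.sqrt (r i)) *
   ((if 0 < r' k then (Num.sqrt (r' k))^-1 else 0) * p' k * (if 0 < r' k then (Num.sqrt (r' k))^-1 else 0)) * T i k).
  rewrite /gamma /petz /suppproj /mxsqrt /mxinvsqrt hprD hpvD hrhoD hvD !mxfun_diag //.
  rewrite !diag_mul //.
  set Pi := U *m diag_mx (\row_i rc (if p i != 0 then 1 else 0)) *m _.
  set S := U *m diag_mx (\row_i rc (Num.sqrt (r i))) *m _.
  set H := hsadj Phi _.
  rewrite tr_cyc /S /Pi !diag_mul // /H.
  have E1 : (\row_i (rc (Num.sqrt (r i)) * rc (if p i != 0 then 1 else 0) * rc (Num.sqrt (r i))) : 'rV[R[i]]_n)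
    = \row_i rc (Num.sqrt (r i) * (if p i != 0 then 1 else 0) * Num.sqrt (r i)).
    by apply/rowP => i; rewrite !mxE !rcM.
  have E2 : (\row_k (rc (if 0 < r' k then (Num.sqrt (r' k))^-1 else 0) * rc (p' k) *
              rc (if 0 < r' k then (Num.sqrt (r' k))^-1 else 0)) : 'rV[R[i]]_m)
    = \row_k rc ((if 0 < r' k then (Num.sqrt (r' k))^-1 else 0) * p' k *
              (if 0 < r' k then (Num.sqrt (r' k))^-1 else 0)).
    by apply/rowP => i; rewrite !mxE !rcM.
  rewrite E1 E2 tr_hsadj ?diag_herm // mxtrace_mulC -!sum_ketbra tr_form.
  rewrite rc_sum rmorph_sum; apply: eq_bigr => i _; rewrite rc_sum rmorph_sum.
  by apply: eq_bigr => k _; rewrite qT -!rcM; exact: rc_conj.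
have hLHS : \sum_i \sum_(k | 0 < prho i k) prho i k * rc (expR (- mm i k)) =
    rc (\sum_i \sum_(k | 0 < p i * T i k) p i * T i k * expR (- mm i k)).
  rewrite rc_sum; apply: eq_bigr => i _; rewrite rc_sum.
  have hpr_ : forall k, prho i k = rc (p i * T i k).
    by move=> k; rewrite /prho tr_ketbra_mul qT rcM.
  apply: eq_big => [k|k _]; first by rewrite hpr_ rc_gt0.
  by rewrite hpr_ -rcM.
rewrite hLHS hgam; split; first by congr rc; exact: hL.
split; first by rewrite rc_gt0; exact: hG0.
split; first by rewrite -rc1 rc_le; exact: hG1.
move=> _ h2; rewrite -rc1; congr rc; apply: hGeq.
by apply: (supp_pos Uu hp); move: h2; rewrite hvD hrhoD.
Qed.
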